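(* Assume the setting and Algorithm 1 described in the context, with $u_k$ $\mu$-strongly concave, and let $\lambda^*$ be a minimizer of $\varphi$ over $\mathbb{R}^m_+$. Then the iterates of Algorithm 1 started from any $\lambda^0\in\mathbb{R}^m_+$ satisfy, for all $t\ge 0$, $$\|z^t-\lambda^*\|_2\le\|\lambda^0-\lambda^*\|_2,\qquad \|y^t-\lambda^*\|_2\le\|\lambda^0-\lambda^*\|_2,\qquad \|\lambda^t-\lambda^*\|_2\le\|\lambda^0-\lambda^*\|_2 .$$
   Context: Setting: $m$ links, $n$ users, routing matrix $C\in\{0,1\}^{m\times n}$ with nonzero columns $C_k$, capacities $b\in\mathbb{R}^m$ with positive entries, utilities $u_k:\mathbb{R}_+\to\mathbb{R}$, $U(x)=\sum_k u_k(x_k)$. For $\lambda\in\mathbb{R}^m_+$: $x_k(\lambda)=\arg\max_{x_k\ge0}\{u_k(x_k)-x_k\langle\lambda,C_k\rangle\}$, $x(\lambda)=(x_k(\lambda))_k$, dual function $\varphi(\lambda)=\langle\lambda,b\rangle+\sum_k(u_k(x_k(\lambda))-x_k(\lambda)\langle\lambda,C_k\rangle)$. When each $u_k$ is $\mu$-strongly concave, $\varphi$ is convex and differentiable on $\mathbb{R}^m_+$ with $\nabla\varphi(\lambda)=b-Cx(\lambda)$, and $\nabla\varphi$ is $L$-Lipschitz with $L=nm^2/\mu$. $[\cdot]_+$ denotes componentwise positive part (projection onto $\mathbb{R}^m_+$). Algorithm 1 (primal-dual fast gradient method): coefficients $\alpha_t=\frac{t+1}{2}$, $A_t=\sum_{j=0}^t\alpha_j=\frac{(t+1)(t+2)}{4}$,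 $\tau_t=\frac{\alpha_{t+1}}{A_{t+1}}=\frac{2}{t+3}$. Given a starting point $\lambda^0\in\mathbb{R}^m_+$, for $t=0,1,\dots$: $y^t=[\lambda^t-\tfrac1L\nabla\varphi(\lambda^t)]_+$, $z^t=[\lambda^0-\tfrac1L\sum_{j=0}^t\alpha_j\nabla\varphi(\lambda^j)]_+$, $\lambda^{t+1}=\tau_t z^t+(1-\tau_t)y^t$. *)

(* Defs.v *)
From HB Require Import structures.
From mathcomp Require Import all_boot all_order all_algebra.
Set Implicit Arguments. Unset Strict Implicit. Unset Printing Implicit Defensive.
Import Order.TTheory GRing.Theory Num.Theory.
Local Open Scope ring_scope.

Section NUM.
Variable R : rcfType.

Definition vdot (m : nat) (u v : 'cV[R]_m) : R := \sum_(i < m) u i 0 * v i 0.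
Definition norm2 (m : nat) (v : 'cV[R]_m) : R := Num.sqrt (vdot v v).

Definition nonneg_vec (m : nat) (v : 'cV[R]_m) : Prop := forall i, 0 <= v i 0.

(* componentwise positive part = projection onto R^m_+ *)
Definition pos_part (m : nat) (v : 'cV[R]_m) : 'cV[R]_m :=
  \col_i Num.max (v i 0) 0.

Definition colk (m n : nat) (C : 'M[R]_(m, n)) (k : 'I_n) : 'cV[R]_m := col k C.

Definition strongly_concave_on_Rplus (mu : R) (f : R -> R) : Prop :=
  forall a c th, 0 <= a -> 0 <= c -> 0 <= th <= 1 ->
    th * f a + (1 - th) * f c + mu / 2 * th * (1 - th) * (a - c) ^+ 2
      <= f (th * a + (1 - th) * c).

Definition is_best_response (m n : nat) (C : 'M[R]_(m, n)) (u : 'I_n -> R -> R)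
    (x : 'cV[R]_m -> 'cV[R]_n) : Prop :=
  forall lam, nonneg_vec lam -> forall k,
    0 <= x lam k 0 /\
    forall y, 0 <= y ->
      u k y - y * vdot lam (colk C k)
        <= u k (x lam k 0) - x lam k 0 * vdot lam (colk C k).

Definition dual_phi (m n : nat) (C : 'M[R]_(m, n)) (b : 'cV[R]_m)
    (u : 'I_n -> R -> R) (x : 'cV[R]_m -> 'cV[R]_n) (lam : 'cV[R]_m) : R :=
  vdot lam b + \sum_(k < n) (u k (x lam k 0) - x lam k 0 * vdot lam (colk C k)).

Definition dual_grad (m n : nat) (C : 'M[R]_(m, n)) (b : 'cV[R]_m)
    (x : 'cV[R]_m -> 'cV[R]_n) (lam : 'cV[R]_m) : 'cV[R]_m :=
  b - C *m x lam.

Definition lipL (m n : nat) (mu : R) : R := n%:R * (m%:R ^+ 2) / mu.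

Definition alpha (t : nat) : R := t.+1%:R / 2.
Definition tau (t : nat) : R := 2 / (t + 3)%:R.

(* Algorithm 1 for a gradient map g, step 1/L, starting point lam0.
   The state at time t is (lambda^t, sum_{j<t} alpha_j g(lambda^j)). *)
Section Alg.
Variables (m : nat) (g : 'cV[R]_m -> 'cV[R]_m) (L : R) (lam0 : 'cV[R]_m).

Fixpoint fgm_state (t : nat) : 'cV[R]_m * 'cV[R]_m :=
  match t with
  | 0 => (lam0, 0)
  | t'.+1 =>
      let (l, s) := fgm_state t' in
      let s' := s + alpha t' *: g l in
      let y := pos_part (l - L^-1 *: g l) in
      let z := pos_part (lam0 - L^-1 *: s') in
      (tau t' *: z + (1 - tau t') *: y, s')
  end.

Definition fgm_lam (t : nat) : 'cV[R]_m := (fgm_state t).1.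

Definition fgm_y (t : nat) : 'cV[R]_m :=
  pos_part (fgm_lam t - L^-1 *: g (fgm_lam t)).

Definition fgm_z (t : nat) : 'cV[R]_m :=
  pos_part (lam0 - L^-1 *: \sum_(j < t.+1) alpha j *: g (fgm_lam j)).

Lemma fgm_state_snd t : (fgm_state t).2 = \sum_(j < t) alpha j *: g (fgm_lam j).
Proof.
elim: t => [|t IH]; first by rewrite big_ord0.
rewrite big_ord_recr /= -IH /fgm_lam /=.
by case: (fgm_state t).
Qed.

Lemma fgm_lamS t :
  fgm_lam t.+1 = tau t *: fgm_z t + (1 - tau t) *: fgm_y t.
Proof.
rewrite /fgm_z /fgm_y big_ord_recr /= -fgm_state_snd /fgm_lam /=.
by case: (fgm_state t).
Qed.

End Alg.
End NUM.

(* Main.v *)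
Require Import Defs.
From HB Require Import structures.
From mathcomp Require Import all_boot all_order all_algebra.
From mathcomp Require Import ring lra.
Import Order.TTheory GRing.Theory Num.Theory.
Local Open Scope ring_scope.

Section Vdot.
Context {R : rcfType} {m : nat}.
Implicit Types u v w : 'cV[R]_m.

Lemma vdotC u v : vdot u v = vdot v u.
Proof. by apply: eq_bigr => i _; rewrite mulrC. Qed.
Lemma vdotDl u v w : vdot (u + v) w = vdot u w + vdot v w.
Proof. by rewrite /vdot -big_split; apply: eq_bigr => i _; rewrite mxE mulrDl. Qed.
Lemma vdotBl u v w : vdot (u - v) w = vdot u w - vdot v w.
Proof. by rewrite /vdot -sumrB; apply: eq_bigr => i _; rewrite !mxE mulrBl. Qed.
Lemma vdotZl a u w : vdot (a *: u) w = a * vdot u w.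
Proof. by rewrite /vdot mulr_sumr; apply: eq_bigr => i _; rewrite !mxE mulrA. Qed.
Lemma vdotDr u v w : vdot w (u + v) = vdot w u + vdot w v.
Proof. by rewrite vdotC vdotDl !(vdotC w). Qed.
Lemma vdotBr u v w : vdot w (u - v) = vdot w u - vdot w v.
Proof. by rewrite vdotC vdotBl !(vdotC w). Qed.
Lemma vdotZr a u w : vdot w (a *: u) = a * vdot w u.
Proof. by rewrite vdotC vdotZl vdotC. Qed.
Lemma vdot_suml k (F : 'I_k -> 'cV[R]_m) w :
  vdot (\sum_(j < k) F j) w = \sum_(j < k) vdot (F j) w.
Proof.
elim: k F => [|k IH] F; first by rewrite !big_ord0 /vdot big1 // => i _; rewrite mxE mul0r.
by rewrite !big_ord_recr /= vdotDl IH.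
Qed.
Lemma vdot_ge0 v : 0 <= vdot v v.
Proof. by apply: sumr_ge0 => i _; rewrite -expr2 sqr_ge0. Qed.
Lemma vdot_sym_sub u v : vdot (u - v) (u - v) = vdot (v - u) (v - u).
Proof. by apply: eq_bigr => i _; rewrite !mxE; ring. Qed.
Lemma vdot_eq0 v : vdot v v = 0 -> v = 0.
Proof.
move=> /eqP; rewrite psumr_eq0; last by move=> i _; rewrite -expr2 sqr_ge0.
move=> /allP H; apply/matrixP => i j; rewrite ord1 mxE.
have := H i (mem_index_enum i); rewrite /= mulf_eq0 orbb => /eqP //.
Qed.
End Vdot.
Lemma cauchy_sum (R : rcfType) k (w : 'I_k -> R) :
  (\sum_(i < k) w i) ^+ 2 <= k%:R * \sum_(i < k) w i ^+ 2.
Proof.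
set Q := \sum_(i < k) w i ^+ 2.
have E : k%:R * Q = \sum_(i < k) \sum_(j < k) (w i ^+ 2 + w j ^+ 2) / 2.
  transitivity (\sum_(i < k) (k%:R * (w i ^+ 2) / 2 + Q / 2)).
    rewrite big_split /= -!mulr_suml -mulr_sumr sumr_const card_ord -/Q.
    by rewrite -[Q *+ k]mulr_natl -splitr.
  apply: eq_bigr => i _.
  rewrite -mulr_suml big_split /= sumr_const card_ord -/Q -mulr_natl; ring.
rewrite E expr2 mulr_suml; apply: ler_sum => i _; rewrite mulr_sumr.
apply: ler_sum => j _.
have := sqr_ge0 (w i - w j); rewrite !expr2; lra.
Qed.

Section Proj.
Context {R : rcfType} {m : nat}.
Implicit Types v w : 'cV[R]_m.

Lemma pp_scalar (a b : R) : (Num.max a 0 - Num.max b 0)^+2 <= (a-b)^+2.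
Proof.
case: (leP a 0) => ha; case: (leP b 0) => hb.
- rewrite subrr expr0n /=; exact: sqr_ge0.
- have : 0 <= a * (a - 2 * b) by apply: mulr_le0; lra.
  rewrite !expr2; lra.
- have : 0 <= b * (b - 2 * a) by apply: mulr_le0; lra.
  rewrite !expr2; lra.
- by [].
Qed.

Lemma pos_part_nonneg v : nonneg_vec (pos_part v).
Proof. by move=> i; rewrite mxE le_max lexx orbT. Qed.

Lemma pos_part_id v : nonneg_vec v -> pos_part v = v.
Proof. by move=> H; apply/matrixP => i j; rewrite ord1 mxE max_l. Qed.

Lemma pp_nonexp v w :
  vdot (pos_part v - pos_part w) (pos_part v - pos_part w) <= vdot (v - w) (v - w).
Proof.
apply: ler_sum => i _; rewrite !mxE -!expr2; exact: pp_scalar.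
Qed.

Lemma vdot_expand (d G : 'cV[R]_m) (c : R) :
  vdot (d - c *: G) (d - c *: G) = vdot d d - 2 * c * vdot G d + c ^+ 2 * vdot G G.
Proof.
rewrite !vdotBl !vdotBr !vdotZl !vdotZr (vdotC d G); ring.
Qed.

Lemma model_scalar (L s l w : R) : 0 < L -> 0 <= w ->
  L / 2 * (Num.max (l - L^-1 * s) 0 - l) ^+ 2 + L / 2 * (w - Num.max (l - L^-1 * s) 0) ^+ 2
  <= s * (w - Num.max (l - L^-1 * s) 0) + L / 2 * (w - l) ^+ 2.
Proof.
move=> HL Hw; set z := Num.max _ _.
rewrite -subr_ge0.
have -> : s * (w - z) + L / 2 * (w - l) ^+ 2 -
   (L / 2 * (z - l) ^+ 2 + L / 2 * (w - z) ^+ 2) = (w - z) * (s + L * (z - l)).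
  by rewrite !expr2; field.
rewrite /z; case: (leP (l - L^-1 * s) 0) => h.
- apply: mulr_ge0; first lra.
  have e : L * (l - L^-1 * s) = L * l - s by field; rewrite gt_eqF.
  have := mulr_ge0_le0 (ltW HL) h.
  rewrite e; lra.
- have -> : s + L * (l - L^-1 * s - l) = 0 by field; rewrite gt_eqF.
  by rewrite mulr0.
Qed.

Lemma model_vec (L : R) (s l w : 'cV[R]_m) : 0 < L -> nonneg_vec w ->
  L / 2 * vdot (pos_part (l - L^-1 *: s) - l) (pos_part (l - L^-1 *: s) - l)
  + L / 2 * vdot (w - pos_part (l - L^-1 *: s)) (w - pos_part (l - L^-1 *: s))
  <= vdot s (w - pos_part (l - L^-1 *: s)) + L / 2 * vdot (w - l) (w - l).
Proof.
move=> HL Hw; rewrite /vdot !mulr_sumr -!big_split /=.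
apply: ler_sum => i _; rewrite !mxE -!expr2.
exact: model_scalar.
Qed.

Lemma convex_sq (t : R) (a c v : 'cV[R]_m) : 0 <= t <= 1 ->
  vdot (t *: a + (1 - t) *: c - v) (t *: a + (1 - t) *: c - v)
  <= t * vdot (a - v) (a - v) + (1 - t) * vdot (c - v) (c - v).
Proof.
move=> /andP [h0 h1]; rewrite /vdot !mulr_sumr -big_split /=.
apply: ler_sum => i _; rewrite !mxE -!expr2.
have -> : t * a i 0 + (1 - t) * c i 0 - v i 0 = t * (a i 0 - v i 0) + (1 - t) * (c i 0 - v i 0) by ring.
set p := a i 0 - v i 0; set q := c i 0 - v i 0.
have h3 : 0 <= t * (1-t) * (p - q)^+2.
  by apply: mulr_ge0; [apply: mulr_ge0=>//; lra| apply: sqr_ge0].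
move: h3; rewrite !expr2; lra.
Qed.

Lemma nonneg_comb (t : R) (a c : 'cV[R]_m) : 0 <= t <= 1 -> nonneg_vec a -> nonneg_vec c ->
  nonneg_vec (t *: a + (1 - t) *: c).
Proof.
move=> /andP [h0 h1] Ha Hc i; rewrite !mxE.
by apply: addr_ge0; apply: mulr_ge0 => //; lra.
Qed.
End Proj.

Lemma aux_sc {R : rcfType} {Ua Uy W a y p c d th : R} :
  th * Ua + (1 - th) * Uy + c * th * (1 - th) * d <= W ->
  W - (th * a + (1 - th) * y) * p <= Ua - a * p ->
  (1 - th) * (Uy - y * p - (Ua - a * p) + c * d * th) <= 0.
Proof.
move=> H1 H2; rewrite -subr_ge0 in H1; rewrite -subr_ge0 in H2; rewrite -oppr_ge0.
have -> : - ((1 - th) * (Uy - y * p - (Ua - a * p) + c * d * th)) =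
  (W - (th * Ua + (1 - th) * Uy + c * th * (1 - th) * d)) +
  (Ua - a * p - (W - (th * a + (1 - th) * y) * p)) by ring.
exact: addr_ge0.
Qed.

Section Main.
Variables (R : rcfType) (m n : nat) (C : 'M[R]_(m, n)) (b : 'cV[R]_m)
  (u : 'I_n -> R -> R) (mu : R) (x : 'cV[R]_m -> 'cV[R]_n).
Hypotheses (HC : forall i k, C i k = 0 \/ C i k = 1) (Hmu : 0 < mu)
  (Hsc : forall k, strongly_concave_on_Rplus mu (u k))
  (Hbr : is_best_response C u x).

Definition fval (lam : 'cV[R]_m) k y := u k y - y * vdot lam (colk C k).

Lemma sc_br lam k (y : R) : nonneg_vec lam -> 0 <= y ->
  fval lam k y <= fval lam k (x lam k 0) - mu / 2 * (y - x lam k 0) ^+ 2.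
Proof.
move=> Hl Hy; rewrite /fval.
have [ha Hmax] := Hbr _ Hl k.
set a : R := x lam k 0; set p := vdot lam (colk C k).
set K := mu / 2 * (y - a) ^+ 2.
set D := u k y - y * p - (u k a - a * p).
have HK : 0 <= K by apply: mulr_ge0; [apply: divr_ge0; [exact: ltW | by []] | apply: sqr_ge0].
have key : forall th : R, 0 <= th -> th < 1 -> D + K * th <= 0.
  move=> th h0 h1.
  have Hs := Hsc k a y th ha Hy; rewrite h0 (ltW h1) in Hs; have {}Hs := Hs isT.
  have Hn : 0 <= th * a + (1 - th) * y.
    by apply: addr_ge0; apply: mulr_ge0 => //; lra.
  have := Hmax _ Hn => Hm.
  have E : (1 - th) * (D + K * th) <= 0.
    have -> : K = mu / 2 * (a - y) ^+ 2 by rewrite /K; congr (_ * _); rewrite !expr2; ring.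
    rewrite /D.
    exact: (aux_sc Hs Hm).
  by move: E; rewrite pmulr_rle0 //; lra.
have D0 : D <= 0 by have := key 0 (lexx _); rewrite mulr0 addr0; apply; lra.
rewrite -subr_ge0. have -> : u k a - a * p - K - (u k y - y * p) = - D - K by rewrite /D; ring.
rewrite subr_ge0 leNgt; apply/negP => H.
have Kp : 0 < K by lra.
pose th := (- D + K) / (2 * K).
have Eth : th * K = (- D + K) / 2 by rewrite /th; field; lra.
have t0 : 0 <= th by apply: divr_ge0; lra.
have t1 : th < 1 by rewrite /th ltr_pdivrMr; lra.
have := key th t0 t1; rewrite mulrC Eth; lra.
Qed.

Lemma vdot_mulmx (a : 'cV[R]_n) (d : 'cV[R]_m) :
  vdot (C *m a) d = \sum_(k < n) a k 0 * vdot d (colk C k).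
Proof.
rewrite /vdot.
under eq_bigr => i _ do rewrite mxE big_distrl /=.
rewrite exchange_big /=; apply: eq_bigr => k _.
rewrite big_distrr /=; apply: eq_bigr => i _.
by rewrite /colk mxE; ring.
Qed.

Lemma phi_id lam nu :
  dual_phi C b u x nu - dual_phi C b u x lam - vdot (dual_grad C b x lam) (nu - lam)
  = \sum_(k < n) (fval nu k (x nu k 0) - fval nu k (x lam k 0)).
Proof.
rewrite /dual_grad vdotBl vdot_mulmx /dual_phi vdotBr (vdotC nu) (vdotC lam).
under [X in _ - (_ - X)]eq_bigr => k _ do rewrite vdotBl.
have -> : \sum_(k < n) (fval nu k (x nu k 0) - fval nu k (x lam k 0)) =
  \sum_(k < n) (u k (x nu k 0) - x nu k 0 * vdot nu (colk C k))
  - \sum_(k < n) (u k (x lam k 0) - x lam k 0 * vdot lam (colk C k))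
  + \sum_(k < n) x lam k 0 * (vdot nu (colk C k) - vdot lam (colk C k)).
  by rewrite -sumrB -big_split; apply: eq_bigr => k _ /=; rewrite /fval; ring.
ring.
Qed.

Lemma phi_convex lam nu : nonneg_vec lam -> nonneg_vec nu ->
  dual_phi C b u x lam + vdot (dual_grad C b x lam) (nu - lam) <= dual_phi C b u x nu.
Proof.
move=> Hl Hn; rewrite -subr_ge0.
have -> : dual_phi C b u x nu - (dual_phi C b u x lam + vdot (dual_grad C b x lam) (nu - lam))
  = dual_phi C b u x nu - dual_phi C b u x lam - vdot (dual_grad C b x lam) (nu - lam) by ring.
rewrite phi_id; apply: sumr_ge0 => k _; rewrite subr_ge0.
have [ha _] := Hbr _ Hl k. have [_ Hm] := Hbr _ Hn k.
exact: Hm.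
Qed.

Lemma sq_bound (s d : R) : - (mu / 2 * d ^+ 2) - d * s <= s ^+ 2 / (2 * mu).
Proof.
rewrite -subr_ge0.
have -> : s ^+ 2 / (2 * mu) - (- (mu / 2 * d ^+ 2) - d * s) = (mu * d + s) ^+ 2 / (2 * mu).
  by field; rewrite gt_eqF.
by apply: divr_ge0; [apply: sqr_ge0 | apply: mulr_ge0 => //; apply: ltW].
Qed.

Lemma colk_bound (d : 'cV[R]_m) k : vdot d (colk C k) ^+ 2 <= m%:R * vdot d d.
Proof.
rewrite /vdot; apply: le_trans (cauchy_sum _ _ _) _.
apply: ler_wpM2l => //; apply: ler_sum => i _.
rewrite /colk mxE; case: (HC i k) => ->; rewrite ?mulr0 ?mulr1.
- by rewrite expr0n /= -expr2 sqr_ge0.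
- by rewrite expr2.
Qed.

Lemma phi_descent lam nu : nonneg_vec lam -> nonneg_vec nu ->
  dual_phi C b u x nu <= dual_phi C b u x lam + vdot (dual_grad C b x lam) (nu - lam)
     + lipL m n mu / 2 * vdot (nu - lam) (nu - lam).
Proof.
move=> Hl Hn.
suff : dual_phi C b u x nu - dual_phi C b u x lam - vdot (dual_grad C b x lam) (nu - lam)
   <= lipL m n mu / 2 * vdot (nu - lam) (nu - lam) by lra.
rewrite phi_id.
apply: (@le_trans _ _ (\sum_(k < n) vdot (nu - lam) (colk C k) ^+ 2 / (2 * mu))).
  apply: ler_sum => k _.
  have [ha _] := Hbr _ Hl k. have [hc _] := Hbr _ Hn k.
  have H := @sc_br lam k _ Hl hc.
  have E : forall y, fval nu k y = fval lam k y - y * vdot (nu - lam) (colk C k).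
    by move=> y; rewrite /fval vdotBl; ring.
  rewrite !E.
  have := sq_bound (vdot (nu - lam) (colk C k)) (x nu k 0 - x lam k 0).
  move: H; rewrite /fval; lra.
apply: (@le_trans _ _ (\sum_(k < n) (m%:R * vdot (nu - lam) (nu - lam)) / (2 * mu))).
  apply: ler_sum => k _; apply: ler_wpM2r; first by rewrite invr_ge0 mulr_ge0 // ltW.
  exact: colk_bound.
rewrite sumr_const card_ord /lipL.
have HD := vdot_ge0 (nu - lam).
have Hm2 : (m%:R : R) <= m%:R ^+ 2 by rewrite -natrX ler_nat expnS; case: m => // m'; rewrite leq_pmulr // expn_gt0.
rewrite -[_ *+ n]mulr_natl.
rewrite -subr_ge0.
have -> : n%:R * (m%:R ^+ 2) / mu / 2 * vdot (nu - lam) (nu - lam) - n%:R * (m%:R * vdot (nu - lam) (nu - lam) / (2 * mu))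
   = n%:R * (m%:R ^+ 2 - m%:R) * vdot (nu - lam) (nu - lam) / (2 * mu) by field; rewrite gt_eqF.
apply: divr_ge0; last by rewrite mulr_ge0 // ltW.
by rewrite mulr_ge0 // mulr_ge0 // subr_ge0.
Qed.


Lemma aux_mono {u1 u2 a c p q K1 K2 : R} :
  u1 - c * p <= u2 - a * p - K1 -> u2 - a * q <= u1 - c * q - K2 ->
  K1 + K2 <= (c - a) * (p - q).
Proof.
move=> H1 H2; rewrite -subr_ge0 in H1; rewrite -subr_ge0 in H2; rewrite -subr_ge0.
have -> : (c - a) * (p - q) - (K1 + K2) =
  (u2 - a * p - K1 - (u1 - c * p)) + (u1 - c * q - K2 - (u2 - a * q)) by ring.
exact: addr_ge0.
Qed.

Lemma diff_sub (V : zmodType) (b0 X Y : V) : (b0 - X) - (b0 - Y) = Y - X.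
Proof. by rewrite opprB addrC addrA subrK. Qed.

Lemma cocoercive lam nu G : nonneg_vec lam -> nonneg_vec nu -> (0 < m)%N ->
  G = dual_grad C b x lam - dual_grad C b x nu ->
  vdot G G <= lipL m n mu * vdot G (lam - nu).
Proof.
move=> Hl Hn Hm ->.
rewrite /dual_grad diff_sub -mulmxBr.
set v := x nu - x lam.
have HV : 0 <= vdot v v by apply: vdot_ge0.
have H1 : mu * vdot v v <= vdot (C *m v) (lam - nu).
  rewrite vdot_mulmx [vdot v v]/vdot mulr_sumr; apply: ler_sum => k _.
  rewrite /v !mxE vdotBl.
  have [ha _] := Hbr _ Hl k. have [hc _] := Hbr _ Hn k.
  have A1 := @sc_br lam k _ Hl hc. have A2 := @sc_br nu k _ Hn ha.
  rewrite /fval in A1 A2.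
  have := aux_mono A1 A2.
  have -> : mu / 2 * (x nu k 0 - x lam k 0) ^+ 2 + mu / 2 * (x lam k 0 - x nu k 0) ^+ 2
     = mu * ((x nu k 0 - x lam k 0) * (x nu k 0 - x lam k 0)) by rewrite !expr2; field.
  by [].
have H2 : vdot (C *m v) (C *m v) <= m%:R * (n%:R * vdot v v).
  apply: (@le_trans _ _ (\sum_(i < m) n%:R * vdot v v)); last by rewrite sumr_const card_ord -[_ *+ m]mulr_natl.
  apply: ler_sum => i _; rewrite mxE -expr2.
  apply: le_trans (cauchy_sum _ _ _) _.
  apply: ler_wpM2l => //; apply: ler_sum => k _.
  case: (HC i k) => ->; rewrite ?mul0r ?mul1r.
  - by rewrite expr0n /= -expr2 sqr_ge0.
  - by rewrite expr2.
apply: le_trans H2 _.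
have Hm2 : (m%:R : R) <= m%:R ^+ 2 by rewrite -natrX ler_nat expnS; case: m Hm => // m' _; rewrite leq_pmulr // expn_gt0.
rewrite /lipL.
apply: (@le_trans _ _ (n%:R * m%:R ^+ 2 / mu * (mu * vdot v v))); last first.
  by apply: ler_wpM2l => //; apply: divr_ge0; [apply: mulr_ge0 => //; apply: sqr_ge0 | apply: ltW].
have -> : n%:R * m%:R ^+ 2 / mu * (mu * vdot v v) = n%:R * m%:R ^+ 2 * vdot v v by field; rewrite gt_eqF.
rewrite mulrA [m%:R * _]mulrC; apply: ler_wpM2r => //; apply: ler_wpM2l => //.
Qed.


Lemma L_pos : (0 < m)%N -> (0 < n)%N -> 0 < lipL m n mu.
Proof.
move=> Hm Hn; rewrite /lipL; apply: divr_gt0 => //.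
by apply: mulr_gt0; rewrite ?ltr0n // exprn_gt0 // ltr0n.
Qed.

Definition Tmap (w : 'cV[R]_m) := pos_part (w - (lipL m n mu)^-1 *: dual_grad C b x w).

Lemma T_nonexp lam nu : (0 < m)%N -> (0 < n)%N -> nonneg_vec lam -> nonneg_vec nu ->
  vdot (Tmap lam - Tmap nu) (Tmap lam - Tmap nu) <= vdot (lam - nu) (lam - nu).
Proof.
move=> Hm Hn Hl Hnu; apply: le_trans (pp_nonexp _ _) _.
set L := lipL m n mu. have HL : 0 < L := L_pos Hm Hn.
set G := dual_grad C b x lam - dual_grad C b x nu.
have -> : lam - L^-1 *: dual_grad C b x lam - (nu - L^-1 *: dual_grad C b x nu)
   = (lam - nu) - L^-1 *: G.
  by apply/matrixP => i j; rewrite !mxE; ring.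
rewrite vdot_expand.
have Hco := @cocoercive lam nu G Hl Hnu Hm erefl.
have HX := vdot_ge0 G.
have HY : 0 <= vdot G (lam - nu).
  have := le_trans HX Hco; rewrite pmulr_rge0 //.
have Hc : 0 <= L^-1 by rewrite invr_ge0 ltW.
have : L^-1 ^+ 2 * vdot G G <= L^-1 * vdot G (lam - nu).
  apply: (@le_trans _ _ (L^-1 ^+ 2 * (L * vdot G (lam - nu)))).
    by apply: ler_wpM2l => //; apply: sqr_ge0.
  by rewrite le_eqVlt; apply/orP; left; apply/eqP; field; rewrite gt_eqF.
rewrite (vdotC G (lam - nu)) in HY *.
have : 0 <= L^-1 * vdot (lam - nu) G by apply: mulr_ge0.
lra.
Qed.

Lemma key_desc lam v : (0 < m)%N -> (0 < n)%N -> nonneg_vec lam -> nonneg_vec v ->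
  dual_phi C b u x (Tmap lam) <= dual_phi C b u x lam + vdot (dual_grad C b x lam) (v - lam)
     + lipL m n mu / 2 * vdot (v - lam) (v - lam).
Proof.
move=> Hm Hn Hl Hv.
set L := lipL m n mu. have HL : 0 < L := L_pos Hm Hn.
have HT : nonneg_vec (Tmap lam) by apply: pos_part_nonneg.
have D := @phi_descent _ _ Hl HT.
have M := @model_vec R m L (dual_grad C b x lam) lam v HL Hv.
rewrite -/(Tmap lam) in M.
have N0 := vdot_ge0 (v - Tmap lam).
have HL2 : 0 <= L / 2 by apply: divr_ge0; [apply: ltW | by []].
have := mulr_ge0 HL2 N0.
move: D M; rewrite -/L !vdotBr; lra.
Qed.

Lemma fixed_point lamS : (0 < m)%N -> (0 < n)%N -> nonneg_vec lamS ->
  (forall lam, nonneg_vec lam -> dual_phi C b u x lamS <= dual_phi C b u x lam) ->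
  Tmap lamS = lamS.
Proof.
move=> Hm Hn Hl Hmin.
set L := lipL m n mu. have HL : 0 < L := L_pos Hm Hn.
have HT : nonneg_vec (Tmap lamS) by apply: pos_part_nonneg.
have D := @phi_descent _ _ Hl HT.
have M := @model_vec R m L (dual_grad C b x lamS) lamS lamS HL Hl.
rewrite -/(Tmap lamS) in M.
have E0 : vdot (lamS - lamS) (lamS - lamS) = 0.
  by rewrite subrr /vdot big1 // => i _; rewrite mxE mul0r.
rewrite E0 mulr0 addr0 (vdot_sym_sub lamS) in M.
have P := Hmin _ HT.
set N := vdot (Tmap lamS - lamS) (Tmap lamS - lamS).
have : L * N <= 0.
  move: D M P; rewrite -/L -/N !vdotBr; lra.
rewrite pmulr_rle0 // => HN.
have : N = 0 by apply/eqP; rewrite eq_le HN vdot_ge0.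
move/vdot_eq0 => /eqP; rewrite subr_eq0 => /eqP //.
Qed.


Section Nest.
Variable (lam0 : 'cV[R]_m).
Hypotheses (Hl0 : nonneg_vec lam0) (Hm : (0 < m)%N) (Hn : (0 < n)%N).

Local Notation g := (dual_grad C b x).
Local Notation phi := (dual_phi C b u x).
Local Notation L := (lipL m n mu).
Local Notation lamt := (fgm_lam g L lam0).
Local Notation yt := (fgm_y g L lam0).
Local Notation zt := (fgm_z g L lam0).

Definition Aseq t : R := \sum_(j < t.+1) alpha R j.
Definition psi t (w : 'cV[R]_m) : R :=
  \sum_(j < t.+1) alpha R j * (phi (lamt j) + vdot (g (lamt j)) (w - lamt j))
  + L / 2 * vdot (w - lam0) (w - lam0).

Lemma alpha_ge0 j : 0 <= alpha R j.
Proof. by rewrite /alpha divr_ge0 // ler0n. Qed.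

Lemma Aseq_ge0 t : 0 <= Aseq t.
Proof. by apply: sumr_ge0 => j _; apply: alpha_ge0. Qed.

Lemma Aseq_rec t : Aseq t.+1 = Aseq t + alpha R t.+1.
Proof. by rewrite /Aseq big_ord_recr. Qed.

Lemma Aseq_closed t : Aseq t = t.+1%:R * t.+2%:R / 4.
Proof.
elim: t => [|t IH].
  by rewrite /Aseq big_ord1 /alpha /=; field.
by rewrite Aseq_rec IH /alpha -!natr1; field.
Qed.

Lemma tau_range t : 0 <= tau R t <= 1.
Proof.
rewrite /tau natrD; apply/andP; split.
  by apply: divr_ge0 => //; apply: addr_ge0; rewrite ?ler0n.
have Ht : 0 <= (t%:R : R) by rewrite ler0n.
rewrite ler_pdivrMr; lra.
Qed.

Lemma A_tau t : Aseq t.+1 * tau R t = alpha R t.+1.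
Proof.
have Ht : 0 <= (t%:R : R) by rewrite ler0n.
rewrite Aseq_closed /tau /alpha natrD -!natr1; field; lra.
Qed.

Lemma A_tau2 t : Aseq t.+1 * tau R t ^+ 2 <= 1.
Proof.
have Ht : 0 <= (t%:R : R) by rewrite ler0n.
have -> : Aseq t.+1 * tau R t ^+ 2 = (t%:R + 2) / (t%:R + 3).
  rewrite Aseq_closed /tau natrD -!natr1; field; lra.
rewrite ler_pdivrMr; lra.
Qed.

Lemma lam_nonneg t : nonneg_vec (lamt t).
Proof.
case: t => [|t] //; rewrite fgm_lamS.
apply: nonneg_comb; [exact: tau_range | exact: pos_part_nonneg | exact: pos_part_nonneg].
Qed.


Lemma psi_strong t w : nonneg_vec w ->
  psi t (zt t) + L / 2 * vdot (w - zt t) (w - zt t) <= psi t w.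
Proof.
move=> Hw.
have HL : 0 < L := L_pos Hm Hn.
set S := \sum_(j < t.+1) alpha R j *: g (lamt j).
have M := @model_vec R m L S lam0 w HL Hw.
have Ez : pos_part (lam0 - L^-1 *: S) = zt t by [].
rewrite Ez in M.
have ES : vdot S (w - zt t) = \sum_(j < t.+1) alpha R j * vdot (g (lamt j)) (w - zt t).
  by rewrite vdot_suml; apply: eq_bigr => j _; rewrite vdotZl.
have Esum : \sum_(j < t.+1) alpha R j * (phi (lamt j) + vdot (g (lamt j)) (w - lamt j)) =
  \sum_(j < t.+1) alpha R j * (phi (lamt j) + vdot (g (lamt j)) (zt t - lamt j))
  + \sum_(j < t.+1) alpha R j * vdot (g (lamt j)) (w - zt t).
  by rewrite -big_split; apply: eq_bigr => j _ /=; rewrite !vdotBr; ring.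
rewrite /psi Esum -ES.
have := vdot_ge0 (zt t - lam0).
move: M; lra.
Qed.

Lemma invariant t w : nonneg_vec w -> Aseq t * phi (yt t) <= psi t w.
Proof.
have HL : 0 < L := L_pos Hm Hn.
have HL2 : 0 <= L / 2 by apply: divr_ge0; [apply: ltW | by []].
elim: t w => [|t IH] w Hw.
  have K := @key_desc lam0 w Hm Hn Hl0 Hw.
  rewrite -/(Tmap lam0) in K.
  have -> : yt 0 = Tmap lam0 by [].
  rewrite /psi big_ord1 /Aseq big_ord1 /=.
  have Ha : alpha R 0 = 1 / 2 by rewrite /alpha /=.
  rewrite Ha /fgm_lam /=.
  have N0 := mulr_ge0 HL2 (vdot_ge0 (w - lam0)).
  move: K; lra.
set lp := lamt t.+1.
set tt := tau R t.
set v := tt *: w + (1 - tt) *: yt t.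
have Htt := tau_range t.
have Hv : nonneg_vec v by apply: nonneg_comb => //; exact: pos_part_nonneg.
have Hlp : nonneg_vec lp by apply: lam_nonneg.
have Hz : nonneg_vec (zt t) by apply: pos_part_nonneg.
have Hy : nonneg_vec (yt t) by apply: pos_part_nonneg.
have H1 : psi t.+1 w = psi t w + alpha R t.+1 * (phi lp + vdot (g lp) (w - lp)).
  by rewrite /psi big_ord_recr /=; ring.
have H2 := @psi_strong t w Hw.
have H2' := IH _ Hz.
have H3 : Aseq t * (phi lp + vdot (g lp) (yt t - lp)) <= Aseq t * phi (yt t).
  by apply: ler_wpM2l; [apply: Aseq_ge0 | exact: (@phi_convex lp (yt t) Hlp Hy)].
have e1 := A_tau t. have e2 := Aseq_rec t. rewrite -/tt in e1.
have H4 : Aseq t.+1 * vdot (g lp) (v - lp) =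
   Aseq t * vdot (g lp) (yt t - lp) + alpha R t.+1 * vdot (g lp) (w - lp).
  have e3 : Aseq t = Aseq t.+1 - alpha R t.+1 by rewrite e2; ring.
  rewrite /v !vdotBr vdotDr !vdotZr e3 -e1; ring.
have Evl : v - lp = tt *: (w - zt t).
  rewrite /lp fgm_lamS /v -/tt opprD addrACA subrr addr0 scalerBr //.
have H5 : Aseq t.+1 * (L / 2 * vdot (v - lp) (v - lp)) <= L / 2 * vdot (w - zt t) (w - zt t).
  rewrite Evl vdotZl vdotZr.
  set N := vdot (w - zt t) (w - zt t).
  have -> : Aseq t.+1 * (L / 2 * (tt * (tt * N))) = (L / 2 * N) * (Aseq t.+1 * tt ^+ 2) by rewrite expr2; ring.
  rewrite -[X in _ <= X]mulr1; apply: ler_wpM2l; last exact: A_tau2.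
  by apply: mulr_ge0 => //; apply: vdot_ge0.
have K := @key_desc lp v Hm Hn Hlp Hv.
rewrite -/(Tmap lp) in K.
have -> : yt t.+1 = Tmap lp by [].
have K' : Aseq t.+1 * phi (Tmap lp) <=
   Aseq t.+1 * (phi lp + vdot (g lp) (v - lp) + L / 2 * vdot (v - lp) (v - lp)).
  by apply: ler_wpM2l => //; apply: Aseq_ge0.
move: K' H1 H2 H2' H3 H4 H5; rewrite e2; lra.
Qed.


Section Opt.
Variable lamS : 'cV[R]_m.
Hypotheses (HlS : nonneg_vec lamS)
  (Hmin : forall lam, nonneg_vec lam -> phi lamS <= phi lam).

Lemma z_bound t : vdot (zt t - lamS) (zt t - lamS) <= vdot (lam0 - lamS) (lam0 - lamS).
Proof.
have HL : 0 < L := L_pos Hm Hn.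
have H1 := @psi_strong t lamS HlS.
have H2 := @invariant t (zt t) (pos_part_nonneg _).
have H3 : Aseq t * phi lamS <= Aseq t * phi (yt t).
  by apply: ler_wpM2l; [apply: Aseq_ge0 | apply: Hmin; apply: pos_part_nonneg].
have H4 : \sum_(j < t.+1) alpha R j * (phi (lamt j) + vdot (g (lamt j)) (lamS - lamt j))
   <= Aseq t * phi lamS.
  rewrite /Aseq mulr_suml; apply: ler_sum => j _; apply: ler_wpM2l; first exact: alpha_ge0.
  by apply: phi_convex => //; apply: lam_nonneg.
rewrite /psi in H1.
rewrite (vdot_sym_sub (zt t)) (vdot_sym_sub lam0).
have : L / 2 * vdot (lamS - zt t) (lamS - zt t) <= L / 2 * vdot (lamS - lam0) (lamS - lam0).
  move: H1 H2 H3 H4; rewrite /psi; lra.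
by rewrite ler_pM2l // divr_gt0.
Qed.

Lemma y_lam_bound t :
  vdot (lamt t - lamS) (lamt t - lamS) <= vdot (lam0 - lamS) (lam0 - lamS) /\
  vdot (yt t - lamS) (yt t - lamS) <= vdot (lam0 - lamS) (lam0 - lamS).
Proof.
have Hfix := @fixed_point lamS Hm Hn HlS Hmin.
have Hy : forall t, vdot (yt t - lamS) (yt t - lamS) <= vdot (lamt t - lamS) (lamt t - lamS).
  move=> t'; have -> : yt t' = Tmap (lamt t') by [].
  rewrite -{1 2}Hfix; apply: T_nonexp => //; apply: lam_nonneg.
suff H : vdot (lamt t - lamS) (lamt t - lamS) <= vdot (lam0 - lamS) (lam0 - lamS).
  by split => //; apply: le_trans (Hy t) H.
elim: t => [|t IH]; first by [].
rewrite fgm_lamS; apply: le_trans (convex_sq _ _ _ _ (tau_range t)) _.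
have := z_bound t. have := le_trans (Hy t) IH. have := tau_range t.
move=> /andP [h0 h1] Hyb Hzb.
apply: (@le_trans _ _ (tau R t * vdot (lam0 - lamS) (lam0 - lamS) + (1 - tau R t) * vdot (lam0 - lamS) (lam0 - lamS))).
  by apply: lerD; apply: ler_wpM2l => //; lra.
by rewrite -mulrDl addrC subrK mul1r.
Qed.
End Opt.

End Nest.
End Main.

Theorem mainTheorem3 (R : rcfType) (m n : nat)
    (C : 'M[R]_(m, n)) (b : 'cV[R]_m) (u : 'I_n -> R -> R) (mu : R)
    (x : 'cV[R]_m -> 'cV[R]_n) (lamS lam0 : 'cV[R]_m) :
  (forall i k, C i k = 0 \/ C i k = 1) ->
  (forall k, exists i, C i k != 0) ->
  (forall i, 0 < b i 0) ->
  0 < mu ->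
  (forall k, strongly_concave_on_Rplus mu (u k)) ->
  is_best_response C u x ->
  nonneg_vec lamS ->
  (forall lam, nonneg_vec lam -> dual_phi C b u x lamS <= dual_phi C b u x lam) ->
  nonneg_vec lam0 ->
  forall t : nat,
    let g := dual_grad C b x in
    let L := lipL m n mu in
    norm2 (fgm_z g L lam0 t - lamS) <= norm2 (lam0 - lamS) /\
    norm2 (fgm_y g L lam0 t - lamS) <= norm2 (lam0 - lamS) /\
    norm2 (fgm_lam g L lam0 t - lamS) <= norm2 (lam0 - lamS).
Proof.
move=> HC _ _ Hmu Hsc Hbr HlS Hmin Hl0 t g L.
case: (posnP m) => [m0|Hm].
  have E : forall v : 'cV[R]_m, vdot v v = 0.
    by move=> v; rewrite /vdot big1 // => [[i Hi]]; exfalso; rewrite m0 in Hi.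
  by rewrite /norm2 !E.
case: (posnP n) => [n0|Hn].
  have L0 : L = 0 by rewrite /L /lipL n0 !mul0r.
  have Hl : forall t, fgm_lam g L lam0 t = lam0.
    elim=> [|t' IH] //; rewrite fgm_lamS /fgm_z /fgm_y IH L0 invr0 !scale0r !subr0.
    by rewrite pos_part_id // -scalerDl addrC subrK scale1r.
  have Ez : fgm_z g L lam0 t = lam0 by rewrite /fgm_z L0 invr0 scale0r subr0 pos_part_id.
  have Ey : fgm_y g L lam0 t = lam0 by rewrite /fgm_y Hl L0 invr0 scale0r subr0 pos_part_id.
  by rewrite Ez Ey Hl.
have [H1 H2] := @y_lam_bound R m n C b u mu x HC Hmu Hsc Hbr lam0 Hl0 Hm Hn lamS HlS Hmin t.
have H3 := @z_bound R m n C b u mu x HC Hmu Hsc Hbr lam0 Hl0 Hm Hn lamS HlS Hmin t.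
by rewrite /norm2 !ler_sqrt ?vdot_ge0.
Qed.
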